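(* Let $n\ge 4$ and let $G$ be a graph having the maximum value of $cM_2$ among all connected graphs of order $n$. Then $$|M(G)|\le -\frac{2}{3}n+\frac{3}{2}+\frac{1}{6}\sqrt{52n^2-132n+81}.$$
   Context: All graphs are finite and simple. For a graph $G$ and a vertex $u$, $d_u(G)$ denotes the degree of $u$ in $G$. The complementary second Zagreb index of $G$ is $cM_2(G)=\sum_{uv\in E(G)}\left|(d_u(G))^2-(d_v(G))^2\right|$. $M(G)$ denotes the set of vertices of $G$ having the maximum degree of $G$. *)

(* Defs.v *)
From HB Require Import structures.
From mathcomp Require Import all_boot all_order all_algebra.
Set Implicit Arguments. Unset Strict Implicit. Unset Printing Implicit Defensive.
Import Order.TTheory GRing.Theory Num.Theory.

Definition simple_graph (n : nat) (e : rel 'I_n) : Prop :=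
  symmetric e /\ irreflexive e.

Definition connected_graph (n : nat) (e : rel 'I_n) : Prop :=
  forall u v : 'I_n, connect e u v.

Definition deg (n : nat) (e : rel 'I_n) (u : 'I_n) : nat :=
  #|[set v | e u v]|.

(* cM_2(G) = sum over (unordered) edges uv of |d_u^2 - d_v^2| ;
   each unordered edge {u,v} is counted once via the pair with u < v. *)
Definition cM2 (n : nat) (e : rel 'I_n) : nat :=
  \sum_(u : 'I_n) \sum_(v : 'I_n | (u < v)%N && e u v)
     absz ((deg e u ^ 2)%:Z - (deg e v ^ 2)%:Z)%R.

Definition maxdeg (n : nat) (e : rel 'I_n) : nat := \max_(u : 'I_n) deg e u.

Definition Mset (n : nat) (e : rel 'I_n) : {set 'I_n} :=
  [set u | deg e u == maxdeg e].

(* Main.v *)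
Require Import Defs.
From HB Require Import structures.
From mathcomp Require Import all_boot all_order all_algebra.
From mathcomp Require Import zify ring lra.
Import Order.TTheory GRing.Theory Num.Theory.
Set Implicit Arguments. Unset Strict Implicit. Unset Printing Implicit Defensive.
Local Open Scope ring_scope.

Definition Dz n (e : rel 'I_n) a : int := (deg e a)%:Z.
Definition gz n (e : rel 'I_n) a b : int :=
  if e a b then `|Dz e a ^+ 2 - Dz e b ^+ 2| else 0.
Definition Fz n (e : rel 'I_n) : int := \sum_a \sum_b gz e a b.

Lemma Posz_sum (I : finType) (P : pred I) (F : I -> nat) :
  ((\sum_(i | P i) F i)%N)%:Z = \sum_(i | P i) (F i)%:Z.
Proof. exact: (big_morph Posz PoszD (erefl _)). Qed.

Lemma gz_sym n (e : rel 'I_n) a b : symmetric e -> gz e a b = gz e b a.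
Proof. by move=> hs; rewrite /gz hs distrC. Qed.

Lemma cM2_Fz n (e : rel 'I_n) : simple_graph e -> Fz e = (cM2 e)%:Z *+ 2.
Proof.
move=> [hs hi].
have E1 : (cM2 e)%:Z = \sum_(a : 'I_n) \sum_(b : 'I_n) (if (a < b)%N then gz e a b else 0).
  rewrite /cM2 Posz_sum; apply: eq_bigr => a _.
  rewrite Posz_sum big_mkcond /=; apply: eq_bigr => b _.
  rewrite /gz /Dz; case: (a < b)%N => //=; case: (e a b) => //.
have E2 : forall a b, gz e a b = (if (a < b)%N then gz e a b else 0) + (if (b < a)%N then gz e a b else 0).
  move=> a b; case: (ltngtP a b) => h; rewrite ?addr0 ?add0r //.
  have -> : a = b by apply: val_inj.
  by rewrite /gz hi.
rewrite E1 mulr2n /Fz.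
set X := \sum_(a : 'I_n) \sum_(b : 'I_n) (if (a < b)%N then gz e a b else 0).
have E3 : \sum_(a : 'I_n) \sum_(b : 'I_n) (if (b < a)%N then gz e a b else 0) = X.
  rewrite exchange_big /=; apply: eq_bigr => a _; apply: eq_bigr => b _.
  by rewrite gz_sym.
rewrite -[X in _ = _ + X]E3 -big_split /=; apply: eq_bigr => a _.
rewrite -big_split /=; apply: eq_bigr => b _; exact: E2.
Qed.

Lemma Fz_compare n (e e' : rel 'I_n) (c : 'I_n -> 'I_n -> int) :
  (forall a b, gz e a b + c a b <= gz e' a b) ->
  Fz e + \sum_a \sum_b c a b <= Fz e'.
Proof.
move=> h; rewrite /Fz -big_split /=; apply: ler_sum => a _.
rewrite -big_split /=; apply: ler_sum => b _; exact: h.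
Qed.

Lemma deg_le n (e : rel 'I_n) a : irreflexive e -> (deg e a <= n.-1)%N.
Proof.
move=> hi; rewrite /deg -[n in n.-1]card_ord -(cardsC1 a).
apply: subset_leq_card; apply/subsetP => b; rewrite !inE.
by apply: contraTneq => ->; rewrite hi.
Qed.

Lemma deg_maxdeg n (e : rel 'I_n) a : (deg e a <= maxdeg e)%N.
Proof. exact: leq_bigmax. Qed.

Lemma sum_row n (e : rel 'I_n) x (t : int) :
  \sum_(a : 'I_n) \sum_(b : 'I_n) (if (a == x) && e x b then t else 0) = t *+ deg e x.
Proof.
rewrite (bigD1 x) //= [X in _ + X]big1; last first.
  by move=> a hax; rewrite big1 // => b _; rewrite (negbTE hax).
rewrite addr0 eqxx -big_mkcond /= sumr_const /deg; congr (_ *+ _).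
by rewrite cardsE.
Qed.

Lemma sum_col n (e : rel 'I_n) x (t : int) : symmetric e ->
  \sum_(a : 'I_n) \sum_(b : 'I_n) (if (b == x) && e a x then t else 0) = t *+ deg e x.
Proof.
move=> hs; rewrite exchange_big /= -(sum_row e x t).
by apply: eq_bigr => a _; apply: eq_bigr => b _; rewrite hs.
Qed.

Lemma G1 (a d : int) : 0 <= a -> 0 <= d -> `|a| + d <= `|a + d|.
Proof. move=> *; lia. Qed.
Lemma G2 (a d : int) : 0 <= d -> `|a| + - d <= `|a + d|.
Proof. move=> *; lia. Qed.

Lemma N1 (x y : int) : 0 <= y -> y <= x ->
  `|x ^+ 2 - y ^+ 2| + (2 * x + 1) <= `|(x + 1) ^+ 2 - y ^+ 2|.
Proof.
move=> h1 h2.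
have -> : (x + 1) ^+ 2 - y ^+ 2 = (x ^+ 2 - y ^+ 2) + (2 * x + 1) by ring.
apply: G1; last lia.
have -> : x ^+ 2 - y ^+ 2 = (x - y) * (x + y) by ring.
apply: mulr_ge0; lia.
Qed.
Lemma N2 (x y : int) : 0 <= y -> 0 <= x ->
  `|x ^+ 2 - y ^+ 2| + - (2 * x + 1) <= `|(x + 1) ^+ 2 - y ^+ 2|.
Proof.
move=> h1 h2.
have -> : (x + 1) ^+ 2 - y ^+ 2 = (x ^+ 2 - y ^+ 2) + (2 * x + 1) by ring.
apply: G2; lia.
Qed.

Lemma PoszS (m : nat) : (m.+1)%:Z = m%:Z + 1.
Proof. by rewrite -addn1 PoszD. Qed.

Definition addE n (e : rel 'I_n) (u v : 'I_n) : rel 'I_n :=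
  fun a b => e a b || ((a == u) && (b == v)) || ((a == v) && (b == u)).

Lemma addE_simple n (e : rel 'I_n) u v : simple_graph e -> u != v ->
  simple_graph (addE e u v).
Proof.
move=> [hs hi] huv; split.
  move=> a b; rewrite /addE hs.
  by case: (a == u); case: (b == v); case: (a == v); case: (b == u); rewrite /= ?orbT ?orbF.
move=> a; rewrite /addE hi /=; apply/negP; case/orP => /andP [/eqP -> /eqP h].
  by rewrite h eqxx in huv.
by rewrite h eqxx in huv.
Qed.

Lemma addE_conn n (e : rel 'I_n) u v : connected_graph e -> connected_graph (addE e u v).
Proof.
move=> hc a b; apply: connect_sub (hc a b) => x y exy; apply: connect1.
by rewrite /addE exy.
Qed.

Lemma addE_deg_u n (e : rel 'I_n) u v : u != v -> ~~ e u v ->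
  deg (addE e u v) u = (deg e u).+1.
Proof.
move=> huv nuv; rewrite /deg (_ : [set b | addE e u v u b] = v |: [set b | e u b]).
  by rewrite cardsU1 inE nuv.
apply/setP => b; rewrite !inE /addE eqxx (negbTE huv) /=; case: (e u b); case: (b == v). all: by [].
Qed.

Lemma addE_deg_v n (e : rel 'I_n) u v : symmetric e -> u != v -> ~~ e u v ->
  deg (addE e u v) v = (deg e v).+1.
Proof.
move=> hs huv nuv; rewrite /deg (_ : [set b | addE e u v v b] = u |: [set b | e v b]).
  by rewrite cardsU1 inE hs nuv.
apply/setP => b; rewrite !inE /addE eqxx eq_sym (negbTE huv) /=; case: (e v b); case: (b == u); by [].
Qed.

Lemma addE_deg_x n (e : rel 'I_n) u v x : x != u -> x != v ->
  deg (addE e u v) x = deg e x.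
Proof.
move=> hxu hxv; rewrite /deg; apply: eq_card => b.
by rewrite !inE /addE (negbTE hxu) (negbTE hxv) /= !orbF.
Qed.

Lemma gz_ge0 n (e : rel 'I_n) a b : 0 <= gz e a b.
Proof. by rewrite /gz; case: ifP. Qed.

Lemma stepA_pair n (e : rel 'I_n) u v a b (K s : int) :
  simple_graph e -> u != v -> ~~ e u v -> (forall x, (deg e x <= deg e u)%N) ->
  K = 2 * Dz e u + 1 ->
  s = (if deg e v == deg e u then K else - (2 * Dz e v + 1)) ->
  gz e a b + ((if (a == u) && e u b then K else 0) + (if (b == u) && e a u then K else 0)
    + (if (a == v) && e v b then s else 0) + (if (b == v) && e a v then s else 0))
  <= gz (addE e u v) a b.
Proof.
move=> [hs hi] huv nuv hmax hK hsd.
have nvu : ~~ e v u by rewrite hs.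
have hvu : (v == u) = false by rewrite eq_sym (negbTE huv).
have [hs' hi'] := addE_simple (conj hs hi) huv.
set e' := addE e u v in hs' hi' *.
have Dx : forall y, y != u -> y != v -> Dz e' y = Dz e y.
  by move=> y h1 h2; rewrite /Dz addE_deg_x.
have Du : Dz e' u = Dz e u + 1 by rewrite /Dz addE_deg_u // PoszS.
have Dv : Dz e' v = Dz e v + 1 by rewrite /Dz addE_deg_v // PoszS.
have E'x : forall x y, x != u -> x != v -> y != u -> y != v -> e' x y = e x y.
  by move=> x y h1 h2 h3 h4; rewrite /e' /addE (negbTE h1) (negbTE h2) /= !orbF.
have E'u : forall y, y != v -> e' u y = e u y.
  by move=> y h; rewrite /e' /addE eqxx (negbTE h) (negbTE huv) /= !orbF.
have E'v : forall y, y != u -> e' v y = e v y.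
  by move=> y h; rewrite /e' /addE eqxx (negbTE h) eq_sym (negbTE huv) /= !orbF.
have key_u : forall y, y != u -> y != v -> e u y -> gz e u y + K <= gz e' u y.
  move=> y h1 h2 euy; rewrite /gz E'u // euy Du Dx // hK.
  apply: N1; first by [].
  by rewrite /Dz lez_nat hmax.
have key_v : forall y, y != u -> y != v -> e v y -> gz e v y + s <= gz e' v y.
  move=> y h1 h2 evy; rewrite /gz E'v // evy Dv Dx //.
  rewrite hsd. case: eqP => hd.
    rewrite hK /Dz; have -> : (deg e u)%:Z = (deg e v)%:Z by rewrite hd.
    apply: N1 => //; by rewrite lez_nat hd hmax.
  by apply: N2.
case: (eqVneq a u) => [->|hau].
  rewrite ?eqxx hi (negbTE huv) (negbTE nuv) !andbF /= !addr0.
  case: (eqVneq b v) => [->|hbv].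
    by rewrite /gz (negbTE nuv) add0r gz_ge0.
  case: (eqVneq b u) => [->|hbu].
    by rewrite /gz hi hi' addr0.
  case euy: (e u b); first exact: key_u.
  by rewrite /gz euy addr0 gz_ge0.
case: (eqVneq a v) => [->|hav].
  rewrite ?eqxx hi (negbTE nvu) !andbF /= !add0r addr0.
  case: (eqVneq b u) => [->|hbu].
    by rewrite /gz (negbTE nvu) addr0 gz_ge0.
  case: (eqVneq b v) => [->|hbv].
    by rewrite /gz hi hi' addr0.
  case evy: (e v b); first exact: key_v.
  by rewrite /gz evy addr0 gz_ge0.
rewrite ?(negbTE hau) ?(negbTE hav) /= ?add0r.
case: (eqVneq b u) => [->|hbu].
  rewrite ?eqxx ?hvu ?(negbTE huv) /= addr0.
  case eau: (e a u).
    rewrite gz_sym // [gz e' _ _]gz_sym // addr0; apply: key_u => //.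
    by rewrite hs.
  by rewrite /gz eau addr0 gz_ge0.
case: (eqVneq b v) => [->|hbv].
  rewrite ?eqxx /= add0r.
  case eav: (e a v).
    rewrite gz_sym // [gz e' _ _]gz_sym //; apply: key_v => //.
    by rewrite hs.
  by rewrite /gz eav addr0 gz_ge0.
rewrite /= !addr0 /gz E'x // Dx // Dx //.
Qed.

Lemma pos1 (x : int) : 0 < x -> 0 < (2 * x + 1) * x + (2 * x + 1) * x + (2 * x + 1) * x + (2 * x + 1) * x.
Proof. move=> h; have h1 : 0 < (2 * x + 1) * x by apply: mulr_gt0 => //; lia. lia. Qed.
Lemma pos2 (x y : int) : 0 <= y -> y < x ->
  0 < (2 * x + 1) * x + (2 * x + 1) * x + (- (2 * y + 1)) * y + (- (2 * y + 1)) * y.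
Proof.
move=> h1 h2.
have : (2 * y + 1) * y < (2 * x + 1) * x.
  apply: (@le_lt_trans _ _ ((2 * y + 1) * x)).
    apply: ler_wpM2l; lia.
  rewrite ltr_pM2r; lia.
move=> h3; have -> : (- (2 * y + 1)) * y = - ((2 * y + 1) * y) by rewrite mulNr.
lia.
Qed.

Lemma mulrnz (x : int) m : x *+ m = x * m%:Z.
Proof. by rewrite -mulr_natr natz. Qed.

Lemma deg_pos n (e : rel 'I_n) u v : connected_graph e -> u != v -> (0 < deg e u)%N.
Proof.
move=> hc huv; case/connectP: (hc u v) => [[|x p]] /=.
  by move=> _ h; rewrite h eqxx in huv.
case/andP => hux _ _; rewrite /deg; apply/card_gt0P; exists x; by rewrite inE.
Qed.

Lemma stepA n (e : rel 'I_n) u v : simple_graph e -> connected_graph e ->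
  (forall e' : rel 'I_n, simple_graph e' -> connected_graph e' -> Fz e' <= Fz e) ->
  (forall x, (deg e x <= deg e u)%N) -> u != v -> e u v.
Proof.
move=> hsi hc hmax hdeg huv; apply/negPn/negP => nuv.
have [hs hi] := hsi.
pose K := 2 * Dz e u + 1.
pose s := if deg e v == deg e u then K else - (2 * Dz e v + 1).
have h := Fz_compare (fun a b => stepA_pair a b hsi huv nuv hdeg (erefl K) (erefl s)).
have h2 := hmax _ (addE_simple hsi huv) (addE_conn u v hc).
have hsum : \sum_(a : 'I_n) \sum_(b : 'I_n)
    ((if (a == u) && e u b then K else 0) + (if (b == u) && e a u then K else 0)
    + (if (a == v) && e v b then s else 0) + (if (b == v) && e a v then s else 0))
    = K *+ deg e u + K *+ deg e u + s *+ deg e v + s *+ deg e v.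
  under eq_bigr do rewrite !big_split /=.
  rewrite !big_split /= (@sum_row _ e u K) (@sum_col _ e u K hs) (@sum_row _ e v s) (@sum_col _ e v s hs) //.
rewrite hsum in h.
have hpos : 0 < K *+ deg e u + K *+ deg e u + s *+ deg e v + s *+ deg e v.
  have du0 := deg_pos hc huv.
  have hvu := hdeg v.
  rewrite !(mulrnz K) !(mulrnz s) /s /K /Dz.
  case: eqP => hd.
    rewrite hd; have : (0 < (deg e u)%:Z) by rewrite ltz_nat.
    move=> hx; exact: pos1.
  have hlt : ((deg e v)%:Z < (deg e u)%:Z).
    by rewrite ltz_nat ltn_neqAle hvu andbT; apply/eqP.
  have hy : (0 <= (deg e v)%:Z) by [].
  move: hlt hy => hxy hy.
  exact: pos2.
have := le_trans h h2; rewrite -lerBrDl subrr leNgt hpos //.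
Qed.


Lemma sum_splitM n (M : {set 'I_n}) (F : 'I_n -> int) :
  \sum_a F a = \sum_(a in M) F a + \sum_(a in ~: M) F a.
Proof.
rewrite (bigID (mem M)) /=; congr (_ + _); apply: eq_bigl => a; by rewrite ?inE.
Qed.

Lemma cardCM n (M : {set 'I_n}) : #|~: M| = (n - #|M|)%N.
Proof. have h := cardsC M; rewrite card_ord in h; lia. Qed.

Lemma Q1 (x y : int) : 0 <= y -> y <= x -> `|x ^+ 2 - y ^+ 2| = x ^+ 2 - y ^+ 2.
Proof. move=> *; apply: ger0_norm; rewrite subr_ge0; nia. Qed.

Lemma Q2 (x y k : int) : 0 <= k -> k <= x -> k <= y ->
  `|x ^+ 2 - y ^+ 2| <= x ^+ 2 + y ^+ 2 - 2 * k ^+ 2.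
Proof.
move=> h0 h1 h2.
have a1 : k ^+ 2 <= x ^+ 2 by nia.
have a2 : k ^+ 2 <= y ^+ 2 by nia.
rewrite ler_norml; apply/andP; split; lia.
Qed.

Lemma upper n (e : rel 'I_n) (M : {set 'I_n}) :
  simple_graph e ->
  (forall u, u \in M -> deg e u = n.-1) ->
  (forall b, b \notin M -> (#|M| <= deg e b)%N) ->
  (n - #|M| <= #|M|)%N ->
  Fz e <= 2 * (#|M|)%:Z * (n - #|M|)%N%:Z * ((n.-1)%:Z ^+ 2 - (#|M|)%:Z ^+ 2).
Proof.
move=> [hs hi] hM hnM hmk.
set k := #|M|; set m := (n - k)%N; set N := (n.-1)%:Z.
pose w b := N ^+ 2 - Dz e b ^+ 2.
pose c0 := N ^+ 2 - k%:Z ^+ 2.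
have hDle : forall b, Dz e b <= N by move=> b; rewrite /Dz lez_nat deg_le.
have hD0 : forall b, 0 <= Dz e b by [].
have hDk : forall b, b \notin M -> k%:Z <= Dz e b by move=> b hb; rewrite /Dz lez_nat hnM.
have hDM : forall b, b \in M -> Dz e b = N by move=> b hb; rewrite /Dz hM.
pose psi a b := if a \in M then (if b \in M then 0 else w b)
                else (if b \in M then w a else 2 * c0 - w a - w b).
have hw0 : forall b, 0 <= w b.
  move=> b; rewrite /w subr_ge0; have := hD0 b; have := hDle b; move=> *; nia.
have hwc : forall b, b \notin M -> w b <= c0.
  move=> b hb; rewrite /w /c0 lerD2l lerN2; have := hDk b hb; have k0 : 0 <= k%:Z by []; move=> *; nia.
have hpair : forall a b, gz e a b <= psi a b.
  move=> a b; rewrite /gz /psi.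
  case: (boolP (a \in M)) => ha; case: (boolP (b \in M)) => hb.
  - by rewrite !hDM // subrr normr0; case: ifP.
  - case: ifP => _; last exact: hw0.
    by rewrite (hDM a ha) Q1 // hDle.
  - case: ifP => _; last exact: hw0.
    by rewrite (hDM b hb) distrC Q1 // hDle.
  - have k0 : 0 <= k%:Z by [].
    have := hDk a ha; have := hDk b hb; move=> h1 h2.
    case: ifP => _.
      apply: le_trans (Q2 k0 h2 h1) _; rewrite /w /c0; lia.
    rewrite /w /c0.
    have := Q2 k0 h2 h1; move: (normr_ge0 (Dz e a ^+ 2 - Dz e b ^+ 2)); lia.
have hsum : Fz e <= \sum_(a : 'I_n) \sum_(b : 'I_n) psi a b.
  by apply: ler_sum => a _; apply: ler_sum => b _; exact: hpair a b.
apply: le_trans hsum _ => /=.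
set W := \sum_(b in ~: M) w b.
have hW : W <= c0 *+ m.
  rewrite /m -cardCM -sumr_const; apply: ler_sum => b; rewrite inE; exact: hwc.
have hW0 : 0 <= W by apply: sumr_ge0 => b _.
have E1 : forall a, a \in M -> \sum_b psi a b = W.
  move=> a ha; rewrite (sum_splitM M) big1 ?add0r; last by move=> b hb; rewrite /psi ha hb.
  by apply: eq_bigr => b; rewrite /psi ha inE => /negbTE ->.
have E2 : forall a, a \notin M -> \sum_b psi a b = w a *+ k + ((2 * c0 - w a) *+ m - W).
  move=> a ha; rewrite (sum_splitM M); congr (_ + _).
    by rewrite -sumr_const; apply: eq_bigr => b hb; rewrite /psi (negbTE ha) hb.
  rewrite (eq_bigr (fun b => (2 * c0 - w a) - w b)); last first.
    by move=> b; rewrite /psi (negbTE ha) inE => /negbTE ->.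
  by rewrite sumrB sumr_const /m cardCM.
rewrite (sum_splitM M) (eq_bigr (fun _ => W)) ?sumr_const; last exact: E1.
rewrite (eq_bigr (fun a => w a *+ k + ((2 * c0 - w a) *+ m - W))); last first.
  by move=> a; rewrite inE; exact: E2.
rewrite !big_split /= sumr_const -/W cardCM -/k -/m.
rewrite !sumrMnl -/W.
rewrite (sumrB _ _ (fun _ => 2 * c0) w) sumr_const cardCM -/k -/m -/W -/c0.
have hmk' : (m%:Z <= k%:Z) by rewrite lez_nat.
have hp : 0 <= (k%:Z - m%:Z) * (c0 * m%:Z - W).
  apply: mulr_ge0; first lia.
  by rewrite subr_ge0 -mulrnz.
rewrite !mulrnz. lia.
Qed.

Definition splitG n (j : nat) : rel 'I_n :=
  fun a b => (a != b) && ((a < j)%N || (b < j)%N).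
Arguments splitG : clear implicits.

Lemma split_simple n j : simple_graph (splitG n j).
Proof.
split; first by move=> a b; rewrite /splitG eq_sym orbC.
by move=> a; rewrite /splitG eqxx.
Qed.

Lemma split_conn n j : (0 < j)%N -> connected_graph (splitG n j).
Proof.
move=> hj a b.
have hn : (0 < n)%N by apply: leq_ltn_trans (leq0n a) (ltn_ord a).
pose z : 'I_n := Ordinal hn.
have hz : forall x, connect (splitG n j) x z.
  move=> x; case: (eqVneq x z) => [->|hxz]; first exact: connect0.
  by apply: connect1; rewrite /splitG hxz /= hj orbT.
apply: connect_trans (hz a) _.
by rewrite (sym_connect_sym (fst (split_simple n j))) hz.
Qed.

Lemma card_lt n j : (j <= n)%N -> #|[set a : 'I_n | (a < j)%N]| = j.
Proof.
move=> hjn.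
have -> : [set a : 'I_n | (a < j)%N] = [set widen_ord hjn i | i : 'I_j].
  apply/setP => a; rewrite inE; apply/idP/imsetP.
    by move=> ha; exists (Ordinal ha) => //; apply: val_inj.
  by case=> i _ ->; rewrite /= ltn_ord.
rewrite card_imset ?card_ord //.
by move=> x y /(congr1 val) /= /val_inj.
Qed.

Lemma split_Fz n j : (0 < j)%N -> (j < n)%N ->
  Fz (splitG n j) = ((n.-1)%:Z ^+ 2 - j%:Z ^+ 2) * j%:Z * (n - j)%N%:Z *+ 2.
Proof.
move=> hj hjn.
set L := [set a : 'I_n | (a < j)%N].
have cL : #|L| = j by rewrite card_lt // ltnW.
have dL : forall a, a \in L -> deg (splitG n j) a = n.-1.
  move=> a; rewrite inE => ha; rewrite /deg -[n in n.-1]card_ord -(cardsC1 a); apply: eq_card => b.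
  by rewrite !inE /splitG ha /= andbT eq_sym.
have dnL : forall a, a \notin L -> deg (splitG n j) a = j.
  move=> a; rewrite inE -leqNgt => ha; rewrite /deg; transitivity #|L|; last exact: cL.
  apply: eq_card => b.
  have haj : (a < j)%N = false by rewrite ltnNge ha.
  rewrite !inE /splitG haj /=.
  case hb: (b < j)%N; rewrite ?andbF ?andbT //.
  by apply/negP => /eqP hab; rewrite -hab haj in hb.
pose c1 : int := (n.-1)%:Z ^+ 2 - j%:Z ^+ 2.
pose psi a b : int := if a \in L then (if b \in L then 0 else c1) else (if b \in L then c1 else 0).
have hc1 : 0 <= c1.
  rewrite /c1 subr_ge0; have : (j%:Z <= (n.-1)%:Z) by rewrite lez_nat -ltnS prednK // (leq_ltn_trans (leq0n _) hjn).
  move=> h; nia.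
have hpair : forall a b, gz (splitG n j) a b = psi a b.
  move=> a b; rewrite /gz /psi /Dz.
  case: (boolP (a \in L)) => ha; case: (boolP (b \in L)) => hb.
  - by rewrite !dL // subrr normr0; case: ifP.
  - have -> : splitG n j a b.
      rewrite /splitG; move: ha hb; rewrite !inE => ha hb.
      rewrite ha orTb andbT; apply/eqP => hab; by rewrite -hab ha in hb.
    by rewrite (dL a ha) (dnL b hb) ger0_norm.
  - have -> : splitG n j a b.
      rewrite /splitG; move: ha hb; rewrite !inE => ha hb.
      rewrite hb orbT andbT; apply/eqP => hab; by rewrite hab hb in ha.
    by rewrite (dL b hb) (dnL a ha) distrC ger0_norm.
  - have -> : splitG n j a b = false.
      by rewrite /splitG; move: ha hb; rewrite !inE => /negbTE -> /negbTE ->; rewrite andbF.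
    by [].
rewrite /Fz (eq_bigr (fun a => \sum_b psi a b)); last first.
  by move=> a _; apply: eq_bigr => b _; exact: hpair.
rewrite (sum_splitM L).
rewrite (eq_bigr (fun _ => c1 *+ (n - j))); last first.
  move=> a ha; rewrite (sum_splitM L) big1 ?add0r; last by move=> b hb; rewrite /psi ha hb.
  rewrite -cL -cardCM -sumr_const; apply: eq_bigr => b; rewrite /psi ha inE => /negbTE -> //.
rewrite [X in _ + X](eq_bigr (fun _ => c1 *+ j)); last first.
  move=> a; rewrite inE => ha; rewrite (sum_splitM L) [X in _ + X]big1 ?addr0; last first.
    by move=> b; rewrite inE => hb; rewrite /psi (negbTE ha) (negbTE hb).
  by rewrite -cL -sumr_const; apply: eq_bigr => b hb; rewrite /psi (negbTE ha) hb.
rewrite !sumr_const cardCM cL -/c1 !mulrnz; ring.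
Qed.

Lemma Pdec (n k : int) : 4 <= n -> n + 1 <= 2 * k -> 2 <= k -> k <= n - 1 ->
  k * (n - k) * ((n - 1) ^+ 2 - k ^+ 2) < (k - 1) * (n - k + 1) * ((n - 1) ^+ 2 - (k - 1) ^+ 2).
Proof. move=> h1 h2 h3 h4.
have [p ep] : exists p, n = k + p by exists (n - k); ring.
subst n.
have -> : k * (k + p - k) * ((k + p - 1) ^+ 2 - k ^+ 2) = p * (k * (p - 1) * (2 * k + p - 1)) by ring.
have -> : (k - 1) * (k + p - k + 1) * ((k + p - 1) ^+ 2 - (k - 1) ^+ 2) = p * ((k - 1) * (p + 1) * (2 * k + p - 2)) by ring.
have hp : 0 < p by lia.
rewrite ltr_pM2l //.
rewrite -subr_gt0.
have -> : (k - 1) * (p + 1) * (2 * k + p - 2) - k * (p - 1) * (2 * k + p - 1) = (2 * k - p - 1) * (2 * k + p - 2) - k * p + k by ring.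
have a1 : k <= 2 * k - p - 1 by lia.
have a2 : 2 * k - 1 <= 2 * k + p - 2 by lia.
nia. Qed.

Lemma numA (n k : int) : 4 <= n -> 0 <= k -> 2 * k <= n ->
  3 * k ^+ 2 + (4 * n - 9) * k <= 3 * n ^+ 2 - 5 * n.
Proof. move=> h1 h2 h3. nia. Qed.

Lemma key_ineq n (e : rel 'I_n) :
  (4 <= n)%N -> simple_graph e -> connected_graph e ->
  (forall e' : rel 'I_n, simple_graph e' -> connected_graph e' -> (cM2 e' <= cM2 e)%N) ->
  3 * (#|Mset e|)%:Z ^+ 2 + (4 * n%:Z - 9) * (#|Mset e|)%:Z <= 3 * n%:Z ^+ 2 - 5 * n%:Z.
Proof.
move=> hn hsi hc hext.
have [hs hi] := hsi.
set k := #|Mset e|.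
have hkn : (k <= n)%N by rewrite /k -[X in (_ <= X)%N]card_ord max_card.
have hn4 : 4 <= n%:Z by rewrite lez_nat.
rewrite leNgt; apply/negP => hgt.
have h2k : (n + 1 <= 2 * k)%N.
  rewrite leqNgt; apply/negP => hlt.
  have : 2 * k%:Z <= n%:Z by lia.
  move=> h; have := numA hn4 (le0z_nat k) h; rewrite leNgt hgt //.
have hextz : forall e' : rel 'I_n, simple_graph e' -> connected_graph e' -> Fz e' <= Fz e.
  move=> e' h1 h2; rewrite (cM2_Fz h1) (cM2_Fz hsi) !mulrnz ler_pM2r // lez_nat; exact: hext.
have hdom : forall u, u \in Mset e -> forall v, u != v -> e u v.
  move=> u hu v huv; apply: stepA hsi hc hextz _ huv.
  move: hu; rewrite inE => /eqP ->; exact: deg_maxdeg.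
have hM : forall u, u \in Mset e -> deg e u = n.-1.
  move=> u hu; rewrite /deg -[n in n.-1]card_ord -(cardsC1 u); apply: eq_card => b.
  rewrite !inE; case: (eqVneq b u) => [->|hbu]; first by rewrite hi.
  by rewrite hdom // eq_sym.
have hnM : forall b, b \notin Mset e -> (k <= deg e b)%N.
  move=> b hb; rewrite /k /deg; apply: subset_leq_card; apply/subsetP => x hx.
  rewrite inE hs; apply: hdom => //; apply/eqP => hxb; by rewrite -hxb hx in hb.
have hmk : (n - k <= k)%N by lia.
have hup := upper hsi hM hnM hmk.
rewrite -/k in hup.
pose j := if k == n then 1%N else k.-1.
have hj0 : (0 < j)%N by rewrite /j; case: eqP => _; lia.
have hjn : (j < n)%N by rewrite /j; case: eqP => _; lia.
have hlow := hextz _ (@split_simple n j) (@split_conn n j hj0).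
rewrite (split_Fz hj0 hjn) in hlow.
have hN : (n.-1)%:Z = n%:Z - 1 by lia.
have hnk : ((n - k)%N)%:Z = n%:Z - k%:Z by lia.
have hnj : ((n - j)%N)%:Z = n%:Z - j%:Z by lia.
rewrite hN hnk in hup; rewrite hN hnj mulrnz in hlow.
have := le_trans hlow hup.
rewrite /j; case: eqP => hkn'.
  rewrite hkn' subrr mulr0 mul0r.
  have h1 : 0 < (n%:Z - 1) ^+ 2 - (1%N)%:Z ^+ 2.
    have -> : (n%:Z - 1) ^+ 2 - (1%N)%:Z ^+ 2 = (n%:Z - 2) * n%:Z by ring.
    apply: mulr_gt0; lia.
  have h2 : 0 < n%:Z - (1%N)%:Z by lia.
  have : 0 < ((n%:Z - 1) ^+ 2 - (1%N)%:Z ^+ 2) * (1%N)%:Z * (n%:Z - (1%N)%:Z) * 2.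
    by rewrite mulr1 !mulr_gt0.
  by move=> h; rewrite leNgt h.
have hk2 : (2 <= k)%N by lia.
have hkm1 : ((k.-1)%N)%:Z = k%:Z - 1 by lia.
rewrite hkm1.
have H := Pdec hn4 (_ : n%:Z + 1 <= 2 * k%:Z) (_ : 2 <= k%:Z) (_ : k%:Z <= n%:Z - 1).
have {H} H := H ltac:(lia) ltac:(lia) ltac:(lia).
set A := k%:Z * (n%:Z - k%:Z) * ((n%:Z - 1) ^+ 2 - k%:Z ^+ 2) in H.
set B := (k%:Z - 1) * (n%:Z - k%:Z + 1) * ((n%:Z - 1) ^+ 2 - (k%:Z - 1) ^+ 2) in H.
have -> : ((n%:Z - 1) ^+ 2 - (k%:Z - 1) ^+ 2) * (k%:Z - 1) * (n%:Z - (k%:Z - 1)) * 2 = 2 * B.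
  rewrite /B; ring.
have -> : 2 * k%:Z * (n%:Z - k%:Z) * ((n%:Z - 1) ^+ 2 - k%:Z ^+ 2) = 2 * A.
  rewrite /A; ring.
move=> h; lia.
Qed.

Unset Implicit Arguments.

Theorem proposition3 (R : rcfType) (n : nat) (e : rel 'I_n) :
  (4 <= n)%N ->
  simple_graph e -> connected_graph e ->
  (forall e' : rel 'I_n, simple_graph e' -> connected_graph e' ->
     (cM2 e' <= cM2 e)%N) ->
  (#|Mset e|)%:R <= - (2%:R / 3%:R) * n%:R + 3%:R / 2%:R
     + (6%:R)^-1 * Num.sqrt (52%:R * n%:R ^+ 2 - 132%:R * n%:R + 81%:R) :> R.
Proof.
move=> hn hsi hc hext.
have hq := key_ineq hn hsi hc hext.
set k := #|Mset e| in hq *.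
have hqR : 3 * (k%:R : R) ^+ 2 + (4 * n%:R - 9) * k%:R <= 3 * n%:R ^+ 2 - 5 * n%:R.
  have hN : (3 * (k * k) + 4 * n * k + 5 * n <= 3 * (n * n) + 9 * k)%N by lia.
  move: hN; rewrite -(ler_nat R) !natrD !natrM => hN.
  lra.
set x : R := 6 * k%:R + 4 * n%:R - 9.
set Q : R := 52%:R * n%:R ^+ 2 - 132%:R * n%:R + 81%:R.
have hx2 : x ^+ 2 <= Q.
  have -> : x ^+ 2 = 12 * (3 * (k%:R : R) ^+ 2 + (4 * n%:R - 9) * k%:R) + 16 * n%:R ^+ 2 - 72 * n%:R + 81.
    rewrite /x; ring.
  rewrite /Q; lra.
have hxQ : x <= Num.sqrt Q.
  apply: le_trans (ler_norm x) _.
  rewrite -sqrtr_sqr; exact: ler_wsqrtr.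
rewrite /x in hxQ.
lra.
Qed.
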